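(* Let $d\in\mathbb{N}$, and let $x,y\in\mathbb{R}^d$. The sets $\Pi$, $\Pi^{y}$ and $\Phi(x)$ are coanalytic, and hence Lebesgue measurable.
   Context: For $z\in\mathbb{R}^d$, $\|z\|$ denotes the sup-norm distance from $z$ to $\mathbb{Z}^d$. Write $\mathbb{N}=\{1,2,\dots\}$. For $\psi:\mathbb{N}\to\mathbb{R}_{\ge 0}$, let $W(\psi)$ be the set of pairs $(x,y)\in\mathbb{R}^d\times\mathbb{R}^d$ for which $\|nx+y\|<\psi(n)$ holds for infinitely many $n\in\mathbb{N}$. $\mathcal{D}$ is the set of all non-increasing $\psi:\mathbb{N}\to\mathbb{R}_{\ge0}$ with $\sum_n\psi(n)^d=\infty$, and $\Pi=\bigcap_{\psi\in\mathcal{D}}W(\psi)$. The vertical fiber is $\Phi(x)=\{y\in\mathbb{R}^d:(x,y)\in\Pi\}$ and the horizontal fiber is $\Pi^{y}=\{x\in\mathbb{R}^d:(x,y)\in\Pi\}$. Definitions from descriptive set theory: - A set is analytic if it is the projection of a Borel subset of $\mathbb{N}^{\mathbb{N}}\times X$, where $X$ is the ambient Euclidean space. - A set is coanalytic if its complement is analytic. *)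

(* Defs.v *)
From HB Require Import structures.
From mathcomp Require Import all_boot all_order all_algebra.
From mathcomp Require Import all_classical all_reals all_analysis.
Import Order.TTheory GRing.Theory Num.Theory.
Import numFieldNormedType.Exports.
Local Open Scope classical_set_scope.
Local Open Scope ring_scope.

(* Points of R^d are row vectors 'rV[R]_d; the norm `|.| on 'rV[R]_d in
   MathComp-Analysis is the sup norm (mx_norm = max of |coordinates|). *)

Definition intvec (R : realType) (d : nat) : set 'rV[R]_d :=
  [set k | forall i, k ord0 i \is a Num.int].
Definition distZ (R : realType) (d : nat) (z : 'rV[R]_d) : R :=
  inf [set `|z - k| | k in intvec R d].

Definition W (R : realType) (d : nat) (psi : nat -> R) : set ('rV[R]_d * 'rV[R]_d) :=
  [set xy | infinite_set [set n : nat | (0 < n)%N /\ distZ R d (n%:R *: xy.1 + xy.2) < psi n]].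

(* D: non-increasing psi : N -> R_{>=0} with sum_{n>=1} psi(n)^d = oo.
   psi is a function on nat; only its values on N = {1,2,...} matter. *)
Definition inD (R : realType) (d : nat) (psi : nat -> R) : Prop :=
  (forall n, (0 < n)%N -> 0 <= psi n) /\
  (forall m n, (0 < m)%N -> (m <= n)%N -> psi n <= psi m) /\
  (\sum_(1 <= n <oo) ((psi n) ^+ d)%:E = +oo)%E.

Definition Pi (R : realType) (d : nat) : set ('rV[R]_d * 'rV[R]_d) :=
  [set xy | forall psi, inD R d psi -> W R d psi xy].

Definition Phi (R : realType) (d : nat) (x : 'rV[R]_d) : set 'rV[R]_d :=
  [set y | Pi R d (x, y)].
Definition Pi_hfib (R : realType) (d : nat) (y : 'rV[R]_d) : set 'rV[R]_d :=
  [set x | Pi R d (x, y)].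

Definition borel_set (T : topologicalType) (B : set T) : Prop := <<s open >> B.

Notation baire := {ptws nat -> nat}.

Definition analytic (X : topologicalType) (A : set X) : Prop :=
  exists B : set (baire * X), borel_set (baire * X)%type B /\ A = snd @` B.
Definition coanalytic (X : topologicalType) (A : set X) : Prop :=
  analytic X (~` A).

Definition box (R : realType) (n : nat) (a b : 'rV[R]_n) : set 'rV[R]_n :=
  [set z | forall i, a ord0 i <= z ord0 i < b ord0 i].
Definition box_vol (R : realType) (n : nat) (a b : 'rV[R]_n) : R :=
  \prod_(i < n) Num.max 0 (b ord0 i - a ord0 i).

Definition lebesgue_outer (R : realType) (n : nat) (A : set 'rV[R]_n) : \bar R :=
  ereal_inf [set (\sum_(0 <= k <oo) (box_vol R n (ab.1 k) (ab.2 k))%:E)%E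
            | ab in [set ab : (nat -> 'rV[R]_n) * (nat -> 'rV[R]_n)
                     | A `<=` \bigcup_k box R n (ab.1 k) (ab.2 k)]].

Definition lebesgue_measurable (R : realType) (n : nat) (A : set 'rV[R]_n) : Prop :=
  forall E : set 'rV[R]_n,
    lebesgue_outer R n E = (lebesgue_outer R n (E `&` A) + lebesgue_outer R n (E `&` ~` A))%E.

(* Subsets of R^d x R^d, identified with R^(d+d) via (x,y) |-> row_mx x y. *)
Definition lebesgue_measurable2 (R : realType) (d : nat) (A : set ('rV[R]_d * 'rV[R]_d)) : Prop :=
  lebesgue_measurable R (d + d) [set z | A (lsubmx z, rsubmx z)].

(* Main.v *)
Require Import Defs.
From HB Require Import structures.
From mathcomp Require Import all_boot all_order all_algebra.
From mathcomp Require Import all_classical all_reals all_analysis.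
From mathcomp Require Import ring lra zify.
Import Order.TTheory GRing.Theory Num.Theory.
Import numFieldNormedType.Exports.
Local Open Scope classical_set_scope.
Local Open Scope ring_scope.
Lemma borel_preimage (X Y : topologicalType) (f : X -> Y) :
  continuous f -> forall B, borel_set Y B -> borel_set X (f @^-1` B).
Proof.
move=> fc B; rewrite /borel_set; apply: (@smallest_sub _ _ _ [set B | <<s open >> (f @^-1` B)]).
- split => /=.
  + by rewrite preimage_set0; exact: sigma_algebra0.
  + by move=> A hA; exact: sigma_algebraCD.
  + by move=> A hA; rewrite preimage_bigcup; exact: sigma_algebra_bigcup.
- by move=> A oA /=; apply: sub_sigma_algebra; exact: (proj1 (continuousP f) fc).
Qed.

Lemma borel_open (X : topologicalType) (A : set X) : open A -> borel_set X A.
Proof. by move=> oA; apply: sub_sigma_algebra. Qed.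

Lemma borel_setC (X : topologicalType) (A : set X) : borel_set X A -> borel_set X (~` A).
Proof. by move=> hA; rewrite -setTD; exact: sigma_algebraCD. Qed.

Lemma borel_bigcup (X : topologicalType) (A : (set X)^nat) :
  (forall i, borel_set X (A i)) -> borel_set X (\bigcup_i A i).
Proof. exact: sigma_algebra_bigcup. Qed.

Lemma borel_bigcap (X : topologicalType) (A : (set X)^nat) :
  (forall i, borel_set X (A i)) -> borel_set X (\bigcap_i A i).
Proof.
move=> h; rewrite -(setCK (\bigcap_i A i)) setC_bigcap.
by apply: borel_setC; apply: borel_bigcup => i; exact: borel_setC.
Qed.

Lemma analytic_of_borel (X : topologicalType) (A : set X) : borel_set X A -> analytic X A.
Proof.
move=> hA; exists [set p : baire * X | A p.2]; split.
  have hs : continuous (@snd baire X) by move=> p; exact: cvg_snd.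
  exact: (borel_preimage _ _ _ hs _ hA).
apply/seteqP; split => [x Ax|_ [p Ap <-]] //.
by exists ((fun _ => 0%N), x).
Qed.
Section DZ.
Variables (R : realType) (d : nat).
Implicit Types z w : 'rV[R]_d.

Let S z := [set `|z - k| | k in intvec R d].

Lemma intvec0 : intvec R d 0.
Proof. by move=> i; rewrite mxE. Qed.

Lemma S_ne z : S z !=set0.
Proof. by exists `|z - 0|; exists 0 => //; exact: intvec0. Qed.

Lemma S_lb z : has_lbound (S z).
Proof. by exists 0 => _ [k _ <-]. Qed.

Lemma distZ_ge0 z : 0 <= distZ R d z.
Proof. by apply: lb_le_inf; [exact: S_ne | move=> _ [k _ <-]]. Qed.

Lemma distZ_le z k : intvec R d k -> distZ R d z <= `|z - k|.
Proof. by move=> hk; apply: (ge_inf (S_lb z)); exists k. Qed.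

Lemma distZ_lt z c : distZ R d z < c -> exists2 k, intvec R d k & `|z - k| < c.
Proof. by move=> /(inf_lt (S_ne z)) [_ [k hk <-] h]; exists k. Qed.

Lemma distZ_lip z w : distZ R d z <= distZ R d w + `|z - w|.
Proof.
rewrite -lerBlDr; apply: lb_le_inf; first exact: S_ne.
move=> _ [k hk <-]; rewrite lerBlDr.
apply: (le_trans (distZ_le z k hk)).
have -> : z - k = (z - w) + (w - k) by rewrite addrA subrK.
by rewrite addrC ler_normD.
Qed.

Lemma distZ_cont : continuous (distZ R d).
Proof.
move=> z; apply/(@cvgrPdist_lt _ _ _ _ (@nbhs_filter _ z)) => e e0.
apply: (filterS _ (nbhsx_ballx z e e0)) => w; rewrite -ball_normE /= => hw.
have h1 := distZ_lip z w; have h2 := distZ_lip w z.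
rewrite distrC in h2.
rewrite ltr_norml; apply/andP; split; lra.
Qed.

End DZ.
Section Ser.
Variable R : realType.
Local Open Scope ereal_scope.

Lemma ereal_ge_all (x : \bar R) : (forall M : R, M%:E <= x) -> x = +oo.
Proof.
case: x => [r|//|] h.
- by have := h (r + 1)%R; rewrite lee_fin gerDl ler10.
- by have := h 0%R.
Qed.

Lemma ser_pinfty (u : nat -> R) (a : nat) : (forall n, (a <= n)%N -> (0 <= u n)%R) ->
  (forall M : R, exists K, (M < \sum_(a <= n < K) u n)%R) ->
  \sum_(a <= n <oo) (u n)%:E = +oo.
Proof.
move=> u0 h; apply: ereal_ge_all => M; have [K hK] := h M.
apply: (le_trans _ (nneseries_lim_ge K _)); last by move=> n hn _; rewrite lee_fin; apply: u0.
by rewrite sumEFin lee_fin ltW.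
Qed.

Lemma ser_unbounded (u : nat -> R) (a : nat) : (forall n, (a <= n)%N -> (0 <= u n)%R) ->
  \sum_(a <= n <oo) (u n)%:E = +oo ->
  forall M : R, exists K, (M < \sum_(a <= n < K) u n)%R.
Proof.
move=> u0 hs M; apply/not_existsP => hK.
have : \sum_(a <= n <oo) (u n)%:E <= M%:E.
  apply: lime_le; first by apply: is_cvg_nneseries => n hn _; rewrite lee_fin; apply: u0.
  apply: nearW => K; rewrite sumEFin lee_fin.
  by apply/negbNE/negP => hc; rewrite -ltNge in hc; exact: (hK K hc).
by rewrite hs.
Qed.
End Ser.
Section GM.
Context {R : realType}.

Fixpoint gm (f : nat -> R) (N n : nat) : R :=
  match n with
  | 0 => f N
  | n'.+1 => if (n' < N)%N then f N else Num.min (gm f N n') (f n'.+1)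
  end.

Lemma gm_small f N n : (n <= N)%N -> gm f N n = f N.
Proof. by case: n => [|n] //= h; rewrite h. Qed.

Lemma gm_le_f f N n : (N <= n)%N -> gm f N n <= f n.
Proof.
case: n => [|n] /=; first by rewrite leqn0 => /eqP ->.
case: ifP => h1 h2; last by rewrite ge_min lexx orbT.
by have -> : N = n.+1 by apply/eqP; rewrite eqn_leq h2 h1.
Qed.

Lemma gm_step f N n : gm f N n.+1 <= gm f N n.
Proof.
rewrite /=; case: ifP => h; last by rewrite ge_min lexx.
by rewrite gm_small // ltnW.
Qed.

Lemma gm_anti f N m n : (m <= n)%N -> gm f N n <= gm f N m.
Proof.
elim: n => [|n IH]; first by rewrite leqn0 => /eqP ->.
rewrite leq_eqVlt => /orP [/eqP -> //|h].
exact: le_trans (gm_step f N n) (IH h).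
Qed.

Lemma gm_le_fm f N m n : (N <= m <= n)%N -> gm f N n <= f m.
Proof.
move=> /andP [h1 h2]; apply: le_trans (gm_anti f N _ _ h2) _; exact: gm_le_f.
Qed.

Lemma gm_ge f N n c : (forall m, (N <= m)%N -> (m <= maxn n N)%N -> c <= f m) ->
  c <= gm f N n.
Proof.
elim: n => [|n IH] h /=.
  by apply: h => //; rewrite leq_max leqnn orbT.
case: ifP => hn; first by apply: h => //; rewrite leq_max leqnn orbT.
rewrite le_min; apply/andP; split.
  apply: IH => m h1 h2; apply: h => //; apply: leq_trans h2 _.
  by rewrite geq_max !leq_max leqnn ltnW ?orbT //= leqnSn.
apply: h; first by move: hn; rewrite ltnNge => /negbFE; lia.
by rewrite leq_max leqnn.
Qed.

Lemma gm_ge0 f N n : (forall m, 0 <= f m) -> 0 <= gm f N n.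
Proof. by move=> h; apply: gm_ge => m _ _; exact: h. Qed.

Lemma gm_cont (T : topologicalType) (F : nat -> T -> R) N n :
  (forall m, continuous (F m)) -> continuous (fun t => gm (F^~ t) N n).
Proof.
move=> hF; elim: n => [|n IH] /=; first exact: hF.
have [h|h] := boolP (n < N)%N; rewrite ?h ?(negbTE h); first exact: hF.
move=> t.
exact: (@continuous_min R T (fun t => gm (F^~ t) N n) (F n.+1) t (IH t) (hF _ t)).
Qed.
End GM.
Section Cont.
Variables (R : realType) (d : nat).
Definition fx (m : nat) (xy : 'rV[R]_d * 'rV[R]_d) : R :=
  distZ R d (m%:R *: xy.1 + xy.2).

Lemma fx_cont m : continuous (fx m).
Proof.
move=> xy; apply: (@continuous_comp _ _ _ (fun xy : 'rV[R]_d * 'rV[R]_d => m%:R *: xy.1 + xy.2) (distZ R d)); last exact: distZ_cont.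
apply: continuousD.
  apply: continuousZl_tmp; exact: cvg_fst.
exact: cvg_snd.
Qed.

Lemma pow_cont (T : topologicalType) (f : T -> R) k :
  continuous f -> continuous (fun t => f t ^+ k).
Proof.
move=> hf; elim: k => [|k IH] t.
  by under eq_fun do rewrite expr0; exact: cvg_cst.
under eq_fun do rewrite exprS.
exact: (@continuousM R T f (fun t => f t ^+ k) t (hf t) (IH t)).
Qed.

Lemma sum_cont (T : topologicalType) (F : nat -> T -> R) (s : seq nat) :
  (forall n, continuous (F n)) -> continuous (fun t => \sum_(n <- s) F n t).
Proof.
move=> hF; elim: s => [|a s IH] t.
  by under eq_fun do rewrite big_nil; exact: cvg_cst.
under eq_fun do rewrite big_cons.
exact: (@continuousD R R^o T (F a) (fun t => \sum_(n <- s) F n t) t (hF a t) (IH t)).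
Qed.
End Cont.

Lemma fin_bound (A : set nat) : finite_set A -> exists N, forall n, A n -> (n < N)%N.
Proof.
move=> fA; exists (\max_(x <- finmap.enum_fset (fset_set A)) x).+1 => n An.
rewrite ltnS; apply: (@leq_bigmax_seq _ _ _ id n) => //.
by rewrite in_fset_set // inE.
Qed.

Lemma sum_nat_ge0 (R : realType) (u : nat -> R) a b :
  (forall n, (a <= n)%N -> 0 <= u n) -> 0 <= \sum_(a <= n < b) u n.
Proof.
move=> u0; rewrite big_nat_cond; apply: sumr_ge0 => i /andP [/andP [h _] _]; exact: u0.
Qed.

Lemma sum_split_le (R : realType) (u : nat -> R) a b K : (a <= b)%N ->
  (forall n, (a <= n)%N -> 0 <= u n) ->
  \sum_(a <= n < K) u n <= \sum_(a <= n < b) u n + \sum_(b <= n < K) u n.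
Proof.
move=> ab u0; case: (leqP b K) => bK.
  by rewrite (big_cat_nat ab bK).
rewrite (big_geq (ltnW bK)) addr0.
case: (leqP a K) => aK; last by rewrite (big_geq (ltnW aK)); exact: sum_nat_ge0.
rewrite (big_cat_nat aK (ltnW bK)) lerDl.
by apply: sum_nat_ge0 => n hn; apply: u0; lia.
Qed.

Lemma sum_tail_le (R : realType) (u : nat -> R) a b K : (a <= b)%N ->
  (forall n, (a <= n)%N -> 0 <= u n) ->
  \sum_(b <= n < K) u n <= \sum_(a <= n < K) u n.
Proof.
move=> ab u0; case: (leqP b K) => bK.
  rewrite (big_cat_nat ab bK) lerDr; exact: sum_nat_ge0.
rewrite (big_geq (ltnW bK)); exact: sum_nat_ge0.
Qed.

Section Char.
Variables (R : realType) (d : nat).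

Definition Sm (N K : nat) (xy : 'rV[R]_d * 'rV[R]_d) : R :=
  \sum_(N <= n < K) (gm (fun m => @fx R d m xy) N n) ^+ d.

Definition Bad : set ('rV[R]_d * 'rV[R]_d) :=
  \bigcup_N \bigcap_(M : nat) \bigcup_K [set xy | (M%:R : R) < Sm N.+1 K xy].

Lemma Sm_cont N K : continuous (Sm N K).
Proof.
apply: sum_cont => n; apply: pow_cont; apply: gm_cont => m; exact: (@fx_cont R d).
Qed.

Lemma Bad_borel : borel_set _ Bad.
Proof.
apply: borel_bigcup => N; apply: borel_bigcap => M; apply: borel_bigcup => K.
apply: borel_open.
exact: (proj1 (continuousP _) (Sm_cont N.+1 K) _ (@open_gt R M%:R)).
Qed.

Lemma fx_ge0 m xy : 0 <= @fx R d m xy.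
Proof. exact: distZ_ge0. Qed.

Lemma notPi_Bad : ~` Pi R d = Bad.
Proof.
apply/seteqP; split => xy.
- move=> /= /existsNP [psi /not_implyP [[hp0 [hpa hps]] /contrapT hW]].
  have [N hN] := fin_bound _ hW.
  have hle n : (N.+1 <= n)%N -> psi n <= @fx R d n xy.
    move=> hn; rewrite leNgt; apply/negP => hlt.
    have := hN n (conj (leq_ltn_trans (leq0n N) hn) hlt); lia.
  have hgm n : (N.+1 <= n)%N -> psi n <= gm (fun m => @fx R d m xy) N.+1 n.
    move=> hn; apply: gm_ge => m h1 h2.
    have hm : (m <= n)%N by move: h2; rewrite (maxn_idPl hn).
    apply: le_trans (hpa m n _ hm) (hle m h1); lia.
  exists N => // M _.
  set C := \sum_(1 <= n < N.+1) psi n ^+ d.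
  have [K hK] := @ser_unbounded R (fun n => psi n ^+ d) 1%N
    (fun n hn => exprn_ge0 d (hp0 n hn)) hps (M%:R + C).
  exists K => //=.
  have := @sum_split_le R (fun n => psi n ^+ d) 1%N N.+1 K (ltn0Sn N)
    (fun n hn => exprn_ge0 d (hp0 n hn)).
  rewrite -/C => hsp.
  have h1 : (M%:R : R) < \sum_(N.+1 <= n < K) psi n ^+ d.
    move: hK hsp; rewrite /=; lra.
  apply: (lt_le_trans h1); rewrite /Sm; apply: ler_sum_nat => n /andP [hn _].
  apply: lerXn2r; [rewrite nnegrE; apply: hp0; lia | rewrite nnegrE; apply: gm_ge0 => m; exact: fx_ge0 | exact: hgm].
- move=> [N _ hN] /= hPi.
  pose psi n := gm (fun m => @fx R d m xy) N.+1 n.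
  have hD : inD R d psi.
    split; [|split].
    + by move=> n _; apply: gm_ge0 => m; exact: fx_ge0.
    + by move=> m n _ hmn; exact: gm_anti.
    + apply: ser_pinfty => [n _|M]; first by apply: exprn_ge0; apply: gm_ge0 => m; exact: fx_ge0.
      have [K _ hK] := hN (Num.trunc M).+1 I.
      exists K; apply: (lt_trans (truncnS_gt M)); apply: (lt_le_trans hK).
      apply: (@sum_tail_le R (fun n => psi n ^+ d) 1%N N.+1 K) => // n _.
      by apply: exprn_ge0; apply: gm_ge0 => m; exact: fx_ge0.
  apply: (hPi psi hD); apply: (sub_finite_set _ (finite_II N.+1)).
  move=> n /= [hn hlt]; rewrite ltnNge; apply/negP => hn'.
  by have := gm_le_f (fun m => @fx R d m xy) _ _ hn'; rewrite leNgt hlt.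
Qed.
End Char.
Section GOuter.
Local Open Scope ereal_scope.
Context {R : realType} {T P : Type} (vol : P -> R) (bx : P -> set T).
Hypothesis vol_ge0 : forall p, (0 <= vol p)%R.

Definition gcov (A : set T) := [set c : nat -> P | A `<=` \bigcup_k bx (c k)].
Definition gouter (A : set T) : \bar R :=
  ereal_inf [set \sum_(0 <= k <oo) (vol (c k))%:E | c in gcov A].

Let volE (p : P) : \bar R := (vol p)%:E.
Let volE_ge0 p : 0 <= volE p. Proof. by rewrite lee_fin. Qed.

Lemma gouter_ge0 A : 0 <= gouter A.
Proof.
apply: le_ereal_inf_tmp => _ [c _ <-]; apply: nneseries_ge0 => k _ _; exact: volE_ge0.
Qed.

Lemma le_gouter : {homo gouter : A B / A `<=` B >-> A <= B}.
Proof.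
move=> A B AB; rewrite /gouter. apply: ereal_inf_le_tmp => _ [c hc <-].
by exists c => //; apply: subset_trans AB hc.
Qed.

Lemma gouter_sigma_subadditive : sigma_subadditive gouter.
Proof.
move=> A; have [[i ioo]|] := pselect (exists i, gouter (A i) = +oo).
  rewrite (eseries_pinfty _ _ ioo) ?leey// => n _.
  by rewrite -ltNye (lt_le_trans _ (gouter_ge0 _)).
rewrite -forallNE => Aoo.
suff add2e (e : {posnum R}) :
    gouter (\bigcup_n A n) <= \sum_(i <oo) gouter (A i) + e%:num%:E.
  by apply/lee_addgt0Pr => _/posnumP[].
rewrite (le_trans _ (epsilon_trick _ _ _))//; last first.
  by move=> n; exact: gouter_ge0.
pose Pn n (B : nat -> P) := gcov (A n) B /\
  \sum_(k <oo) volE (B k) <= gouter (A n) + (e%:num / (2 ^ n.+1)%:R)%:E.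
have [G PG] : {G : (nat -> P)^nat & forall n, Pn n (G n)}.
  apply: (@choice _ _ Pn) => n; rewrite /Pn /gouter.
  set S := (X in ereal_inf X); move infS : (ereal_inf S) => iS.
  case: iS infS => [r Sr|Soo|Soo].
  - have en1 : (0 < e%:num / (2 ^ n.+1)%:R)%R by [].
    have /(lb_ereal_inf_adherent en1) : ereal_inf S \is a fin_num by rewrite Sr.
    move=> [x [B AnB muBx] xS].
    by exists B; split => //; rewrite /volE muBx -Sr; exact/ltW.
  - by have := Aoo n; rewrite /gouter Soo.
  - suff : lbound S 0 by move/le_ereal_inf_tmp; rewrite Soo.
    by move=> /= _ [B AnB <-]; apply: nneseries_ge0 => k _ _; exact: volE_ge0.
have muG_ge0 x : 0 <= (volE \o uncurry G) x by exact: volE_ge0.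
apply: (@le_trans _ _ (\esum_(i in setT) (volE \o uncurry G) i)).
  rewrite /gouter; apply: ereal_inf_lbound => /=.
  have /card_esym/ppcard_eqP[f] := card_nat2.
  exists (uncurry G \o f).
    apply: (@subset_trans _  (\bigcup_n \bigcup_k bx (G n k))) => [t [i _]|].
      by move=> /((PG i).1) -[j _ ?]; exists i => //; exists j.
    move=> t [i _ [j _ Bijt]]; exists (f^-1%FUN (i, j)) => //=.
    by rewrite invK ?inE.
  rewrite -(esum_pred_image (volE \o uncurry G) _ xpredT) ?[fun=> _]set_true//.
  by rewrite image_eq.
rewrite (_ : esum _ _ = \sum_(i <oo) \sum_(j <oo ) volE (G i j)); last first.
  pose J : nat -> set (nat * nat) := fun i => [set (i, j) | j in setT].
  rewrite (_ : setT = \bigcup_k J k); last first.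
    by rewrite predeqE => -[a b]; split => // _; exists a => //; exists b.
  rewrite esum_bigcupT /=; last 2 first.
    - apply/trivIsetP => i j _ _ ij.
      rewrite predeqE => -[n m] /=; split => //= -[] [_] _ [<-{n} _].
      by move=> [m' _] [] /esym/eqP; rewrite (negbTE ij).
    - by move=> /= [n m]; exact: volE_ge0.
  rewrite -(image_id [set: nat]) -fun_true esum_pred_image//; last first.
    by move=> n _; exact: esum_ge0.
  apply: eq_eseriesr => /= j _.
  rewrite -(esum_pred_image (volE \o uncurry G) (pair j) predT)//=; last first.
    by move=> ? ? _ _; exact: (@can_inj _ _ _ snd).
  by congr esum; rewrite predeqE => -[a b]; split; move=> [i _ <-]; exists i.
apply: lee_lim.
- apply: is_cvg_nneseries => n *.
  by apply: nneseries_ge0 => m *; exact: (muG_ge0 (n, m)).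
- by apply: is_cvg_nneseries => n *; apply: adde_ge0 => //; exact: gouter_ge0.
- by near=> n; apply: lee_sum => i _; exact: (PG i).2.
Unshelve. all: by end_near. Qed.

End GOuter.
Section Leb.
Variables (R : realType) (n : nat).
Hypothesis hn : (0 < n)%N.

Definition bxp (p : 'rV[R]_n * 'rV[R]_n) := box R n p.1 p.2.
Definition volp (p : 'rV[R]_n * 'rV[R]_n) := box_vol R n p.1 p.2.

Lemma box_vol_ge0 a b : 0 <= box_vol R n a b.
Proof. by apply: prodr_ge0 => i _; rewrite le_max lexx. Qed.

Lemma volp_ge0 p : 0 <= volp p.
Proof. exact: box_vol_ge0. Qed.

Lemma leb_gouter A : lebesgue_outer R n A = gouter volp bxp A.
Proof.
rewrite /lebesgue_outer /gouter; congr ereal_inf; apply/seteqP; split.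
- move=> _ [ab hab <-]; exists (fun k => (ab.1 k, ab.2 k)) => //.
- move=> _ [c hc <-]; exists (fst \o c, snd \o c) => //.
Qed.

Lemma leb0 : lebesgue_outer R n set0 = 0%E.
Proof.
apply/eqP; rewrite eq_le; apply/andP; split; last first.
  by rewrite leb_gouter; apply: gouter_ge0; exact: volp_ge0.
apply: ereal_inf_lbound; exists (fun _ => 0, fun _ => 0) => //.
apply: eseries0 => k _ _; congr (_%:E).
rewrite /box_vol; case: n hn => [//|m] _.
by rewrite big_ord_recl !mxE subrr maxxx mul0r.
Qed.

Lemma leb_ge0 A : (0 <= lebesgue_outer R n A)%E.
Proof. by rewrite leb_gouter; apply: gouter_ge0; exact: volp_ge0. Qed.

Lemma le_leb : {homo lebesgue_outer R n : A B / A `<=` B >-> (A <= B)%E}.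
Proof. by move=> A B AB; rewrite !leb_gouter; apply: le_gouter. Qed.

Lemma leb_sub : sigma_subadditive (lebesgue_outer R n).
Proof.
move=> F; rewrite leb_gouter; under eq_eseriesr do rewrite leb_gouter.
exact: gouter_sigma_subadditive volp_ge0 F.
Qed.

Definition LO : {outer_measure set 'rV[R]_n -> \bar R} :=
  HB.pack (lebesgue_outer R n)
    (isOuterMeasure.Build R _ (lebesgue_outer R n) leb0 leb_ge0 le_leb leb_sub).

Lemma lm_cara A : LO.-caratheodory A -> lebesgue_measurable R n A.
Proof. by []. Qed.


Definition upd (z : 'rV[R]_n) (i : 'I_n) (v : R) : 'rV[R]_n :=
  \row_j (if j == i then v else z ord0 j).

Lemma maxsplit (a b c : R) : Num.max 0 (b - a) =
  Num.max 0 (Num.min b c - a) + Num.max 0 (b - Num.max a c).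
Proof.
rewrite /Num.max /Num.min.
repeat case: ifPn; rewrite ?ltNge ?negbK; move=> *; lra.
Qed.

Lemma vol_split a b i c : box_vol R n a b =
  box_vol R n a (upd b i (Num.min (b ord0 i) c)) +
  box_vol R n (upd a i (Num.max (a ord0 i) c)) b.
Proof.
rewrite /box_vol (bigD1 i) //= [X in _ = X + _](bigD1 i) //= [X in _ = _ + X](bigD1 i) //=.
rewrite !mxE !eqxx (maxsplit (a ord0 i) (b ord0 i) c) mulrDl; congr (_ * _ + _ * _); apply: eq_bigr => j hj;
  by rewrite !mxE (negbTE hj).
Qed.

Definition Hs (i : 'I_n) (c : R) := [set z : 'rV[R]_n | z ord0 i < c].

Lemma Hs_cara i c : LO.-caratheodory (Hs i c).
Proof.
apply: le_caratheodory_measurable => X /=.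
apply: le_ereal_inf_tmp => _ [ab hab <-].
pose ab1 := (ab.1, fun k => upd (ab.2 k) i (Num.min (ab.2 k ord0 i) c)).
pose ab2 := (fun k => upd (ab.1 k) i (Num.max (ab.1 k ord0 i) c), ab.2).
have e1 : (lebesgue_outer R n (X `&` Hs i c) <=
    \sum_(0 <= k <oo) (box_vol R n (ab1.1 k) (ab1.2 k))%:E)%E.
  apply: ereal_inf_lbound; exists ab1 => //.
  move=> z [/hab [k _ hk] hz]; exists k => // j; rewrite /= mxE.
  case: ifP => [/eqP ->|_]; last exact: hk.
  by have /andP [h1 h2] := hk i; rewrite h1 /= lt_min h2.
have e2 : (lebesgue_outer R n (X `&` ~` Hs i c) <=
    \sum_(0 <= k <oo) (box_vol R n (ab2.1 k) (ab2.2 k))%:E)%E.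
  apply: ereal_inf_lbound; exists ab2 => //.
  move=> z [/hab [k _ hk] hz]; exists k => // j; rewrite /= mxE.
  case: ifP => [/eqP ->|_]; last exact: hk.
  have /andP [h1 h2] := hk i; rewrite h2 andbT ge_max h1 /=.
  by rewrite leNgt; apply/negP.
apply: (le_trans (leeD e1 e2)); rewrite -nneseriesD; last 2 first.
- by move=> k _ _; rewrite lee_fin; exact: box_vol_ge0.
- by move=> k _ _; rewrite lee_fin; exact: box_vol_ge0.
rewrite (@eq_eseriesr _ _ (fun k => (box_vol R n (ab.1 k) (ab.2 k))%:E)) // => k _.
by rewrite -EFinD -vol_split.
Qed.


Lemma cara_setT : LO.-caratheodory setT.
Proof.
rewrite -setC0; apply: caratheodory_measurable_setC; exact: caratheodory_measurable_set0.
Qed.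

Lemma cara_ext (A B : set 'rV[R]_n) : (forall z, B z -> A z) ->
  (forall z, A z -> B z) -> LO.-caratheodory B -> LO.-caratheodory A.
Proof. by move=> h1 h2; have -> : A = B by apply/seteqP; split. Qed.

Lemma box_cara a b : LO.-caratheodory (box R n a b).
Proof.
have key (s : seq 'I_n) : LO.-caratheodory
    [set z | forall j, j \in s -> a ord0 j <= z ord0 j < b ord0 j].
  elim: s => [|j s IH].
    by apply: (cara_ext _ _ _ _ cara_setT) => // z _ j.
  have hB : LO.-caratheodory ((~` Hs j (a ord0 j)) `&` Hs j (b ord0 j) `&`
      [set z | forall j, j \in s -> a ord0 j <= z ord0 j < b ord0 j]).
    apply: caratheodory_measurable_setI => //.
    apply: caratheodory_measurable_setI; last exact: Hs_cara.
    apply: caratheodory_measurable_setC; exact: Hs_cara.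
  apply: (cara_ext _ _ _ _ hB) => z /=.
    move=> [[/= h1 h2] h3] j'; rewrite in_cons => /orP [/eqP ->|hj']; last exact: h3.
    by rewrite h2 andbT leNgt; apply/negP => h4; exact: h1.
  move=> h; have /andP[h1 h2] := h j (mem_head _ _); split; [split|] => //.
    by rewrite /Hs /=; apply/negP; rewrite -leNgt.
  by move=> j' hj'; apply: h; rewrite in_cons hj' orbT.
have -> : box R n a b = [set z | forall j, j \in enum 'I_n -> a ord0 j <= z ord0 j < b ord0 j].
  by apply/seteqP; split => z h j; [move=> _; exact: h | apply: h; rewrite mem_enum].
exact: key.
Qed.


Lemma rat_box_near (U : set 'rV[R]_n) z : open U -> U z ->
  exists pq : ('rV[rat]_n * 'rV[rat]_n)%type,
    box R n (map_mx ratr pq.1) (map_mx ratr pq.2) z /\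
    box R n (map_mx ratr pq.1) (map_mx ratr pq.2) `<=` U.
Proof.
rewrite openE => /[apply] h; have [V hV hVU] := h.
have hj (j : 'I_n) : exists pq : rat * rat,
    [/\ ratr pq.1 <= z ord0 j, z ord0 j < ratr pq.2 &
      forall w, ratr pq.1 <= w < ratr pq.2 -> V ord0 j w].
  have := hV ord0 j; move=> /nbhs_ballP [e /= e0 he].
  have [p] := @rat_in_itvoo R (z ord0 j - e) (z ord0 j) ltac:(by rewrite ltrBlDr ltrDl).
  rewrite in_itv /= => /andP [hp1 hp2].
  have [q] := @rat_in_itvoo R (z ord0 j) (z ord0 j + e) ltac:(by rewrite ltrDl).
  rewrite in_itv /= => /andP [hq1 hq2].
  exists (p, q); split => /=; [exact: ltW | exact: hq1 |].
  move=> w /andP [hw1 hw2]; apply: he; rewrite -ball_normE /=.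
  rewrite ltr_norml; apply/andP; split; lra.
have [f hf] := choice hj.
exists (\row_j (f j).1, \row_j (f j).2); split.
  move=> j; rewrite !mxE; by have [h1 h2 _] := hf j; rewrite h1 h2.
move=> w hw; apply: hVU => i j; rewrite (ord1 i).
have [_ _ h3] := hf j; apply: h3; have := hw j; by rewrite !mxE.
Qed.

Lemma open_cara (U : set 'rV[R]_n) : open U -> LO.-caratheodory U.
Proof.
move=> oU.
pose rb (pq : ('rV[rat]_n * 'rV[rat]_n)%type) := box R n (map_mx ratr pq.1) (map_mx ratr pq.2).
pose Q k := match unpickle k with
  | Some pq => if pselect (rb pq `<=` U) then rb pq else set0
  | None => set0 end.
have -> : U = \bigcup_k Q k.
  apply/seteqP; split => z.
  - move=> Uz; have [pq [h1 h2]] := rat_box_near _ _ oU Uz.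
    exists (pickle pq) => //; rewrite /Q pickleK; case: pselect => // /(_ h2) [].
  - move=> [k _ hk]; move: hk; rewrite /Q; case: (unpickle k) => [pq|//]; case: pselect => // h /h //.
apply: caratheodory_measurable_bigcup => k; rewrite /Q; case: unpickle => [pq|].
  case: pselect => hh; [exact: box_cara | exact: caratheodory_measurable_set0].
exact: caratheodory_measurable_set0.
Qed.

Lemma borel_cara (A : set 'rV[R]_n) : borel_set _ A -> LO.-caratheodory A.
Proof.
rewrite /borel_set; apply: smallest_sub; last by move=> B; exact: open_cara.
split.
- exact: caratheodory_measurable_set0.
- by move=> B hB; rewrite setTD; exact: caratheodory_measurable_setC.
- by move=> F hF; exact: caratheodory_measurable_bigcup.
Qed.

End Leb.
Lemma pair_contl (T U : topologicalType) (y : U) : continuous (fun x : T => (x, y)).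
Proof. by move=> x; apply: cvg_pair; [exact: cvg_id | exact: cvg_cst]. Qed.

Lemma pair_contr (T U : topologicalType) (x : T) : continuous (fun y : U => (x, y)).
Proof. by move=> y; apply: cvg_pair; [exact: cvg_cst | exact: cvg_id]. Qed.

Lemma pair_cont (T U V : topologicalType) (f : T -> U) (g : T -> V) :
  continuous f -> continuous g -> continuous (fun z => (f z, g z)).
Proof. by move=> hf hg z; apply: cvg_pair; [exact: hf | exact: hg]. Qed.

Theorem lemma9 (R : realType) (d : nat) (hd : (0 < d)%N) (x y : 'rV[R]_d) :
  coanalytic ('rV[R]_d * 'rV[R]_d)%type (Pi R d) /\
  coanalytic 'rV[R]_d (Pi_hfib R d y) /\
  coanalytic 'rV[R]_d (Phi R d x) /\
  lebesgue_measurable2 R d (Pi R d) /\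
  lebesgue_measurable R d (Pi_hfib R d y) /\
  lebesgue_measurable R d (Phi R d x).
Proof.
have hnP : borel_set _ (~` Pi R d) by rewrite notPi_Bad; exact: Bad_borel.
have hP : borel_set _ (Pi R d) by rewrite -(setCK (Pi R d)); exact: borel_setC.
have hnH : borel_set _ (~` Pi_hfib R d y).
  exact: (borel_preimage _ _ _ (@pair_contl _ _ y) _ hnP).
have hnF : borel_set _ (~` Phi R d x).
  exact: (borel_preimage _ _ _ (@pair_contr _ _ x) _ hnP).
have hH : borel_set _ (Pi_hfib R d y) by rewrite -(setCK (Pi_hfib R d y)); exact: borel_setC.
have hF : borel_set _ (Phi R d x) by rewrite -(setCK (Phi R d x)); exact: borel_setC.
have hdd : (0 < d + d)%N by rewrite addn_gt0 hd.
split; first exact: analytic_of_borel.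
split; first exact: analytic_of_borel.
split; first exact: analytic_of_borel.
split.
  rewrite /lebesgue_measurable2; apply: (lm_cara _ _ hdd); apply: (borel_cara _ _ hdd).
  have hc : continuous (fun z : 'rV[R]_(d + d) => (lsubmx z, rsubmx z)).
    by apply: pair_cont; [exact: continuous_lsubmx | exact: continuous_rsubmx].
  exact: (borel_preimage _ _ _ hc _ hP).
split; apply: (lm_cara _ _ hd); exact: (borel_cara _ _ hd).
Qed.
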